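(* Let $A$ be (the matrix of) a te-lace with at least three rows and let $p=(i,j)$ be a pivot of $A$. Then the rows of $A/\!\!/p$ form a te-lace.
   Context: A set of vectors is identified with the matrix whose rows are these vectors. A matrix is totally equimodular if every set of linearly independent rows forms a matrix of full row rank whose nonzero maximal minors all have the same absolute value, and totally unimodular if all its square submatrices have determinant in $\{0,\pm1\}$. A linearly independent set of $\{0,\pm1\}$-vectors is a te-set if its matrix is totally equimodular, a tu-set if its matrix is totally unimodular, and a te-lace if it is a te-set, not a tu-set, and all its proper subsets are tu-sets. A pivot of $A$ is a position $p=(i,j)$ with $A_i^j\neq0$; $A/p$ is obtained by dividing row $i$ by $A_i^j$ and adding multiples of it to the other rows so that column $j$ becomes the $i$-th unit vector; the trim $A/\!\!/p$ is obtained from $A/p$ by deleting row $i$ and column $j$. *)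

(* Defs.v *)
From HB Require Import structures.
From mathcomp Require Import all_boot all_order all_algebra.
Set Implicit Arguments. Unset Strict Implicit. Unset Printing Implicit Defensive.
Import Order.TTheory GRing.Theory Num.Theory.
Local Open Scope ring_scope.

(* A set of vectors is identified with the matrix whose rows are these vectors. *)

Definition pm1_mx (m n : nat) (A : 'M[rat]_(m, n)) : Prop :=
  forall i j, A i j \in [:: 0; 1; -1].

Definition subsq (m n k : nat) (A : 'M[rat]_(m, n)) (f : 'I_k -> 'I_m)
  (g : 'I_k -> 'I_n) : 'M[rat]_k := mxsub f g A.

Definition totally_unimodular (m n : nat) (A : 'M[rat]_(m, n)) : Prop :=
  forall k (f : 'I_k -> 'I_m) (g : 'I_k -> 'I_n),
    \det (subsq A f g) \in [:: 0; 1; -1].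

Definition totally_equimodular (m n : nat) (A : 'M[rat]_(m, n)) : Prop :=
  forall k (f : 'I_k -> 'I_m), row_free (rowsub f A) ->
    \rank (rowsub f A) = k /\
    forall g1 g2 : 'I_k -> 'I_n,
      \det (subsq A f g1) != 0 -> \det (subsq A f g2) != 0 ->
      `|\det (subsq A f g1)| = `|\det (subsq A f g2)|.

Definition rows_of (m n : nat) (A : 'M[rat]_(m, n)) (S : {set 'I_m}) :
  'M[rat]_(#|S|, n) := rowsub (fun r : 'I_#|S| => enum_val r) A.

Definition te_set (m n : nat) (A : 'M[rat]_(m, n)) : Prop :=
  pm1_mx A /\ row_free A /\ totally_equimodular A.

Definition tu_set (m n : nat) (A : 'M[rat]_(m, n)) : Prop :=
  pm1_mx A /\ row_free A /\ totally_unimodular A.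

Definition te_lace (m n : nat) (A : 'M[rat]_(m, n)) : Prop :=
  te_set A /\ ~ tu_set A /\
  forall S : {set 'I_m}, S \proper [set: 'I_m] -> tu_set (rows_of A S).

(* Pivoting A/p at p = (i,j): divide row i by A i j, and subtract multiples
   of it from the other rows so that column j becomes the i-th unit vector. *)
Definition pivot_mx (m n : nat) (A : 'M[rat]_(m, n)) (i : 'I_m) (j : 'I_n) :
  'M[rat]_(m, n) :=
  \matrix_(r, c) if r == i then A i c / A i j
                 else A r c - A r j / A i j * A i c.

Definition trim_mx (m n : nat) (A : 'M[rat]_(m.+1, n.+1)) (i : 'I_m.+1)
  (j : 'I_n.+1) : 'M[rat]_(m, n) :=
  row' i (col' j (pivot_mx A i j)).

(* Main.v *)
Require Import Defs.
From mathcomp Require Import all_boot all_order all_algebra.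
From mathcomp Require Import ring fingroup perm.
Import Order.TTheory GRing.Theory Num.Theory.
Set Implicit Arguments. Unset Strict Implicit. Unset Printing Implicit Defensive.
Local Open Scope ring_scope.

Definition ext (p : nat) (x0 : 'I_p.+1) k (f : 'I_k -> 'I_p) : 'I_k.+1 -> 'I_p.+1 :=
  fun x => match unlift ord0 x with Some y => lift x0 (f y) | None => x0 end.

Arguments ext {p} x0 {k} f _.

Lemma ext0 p (x0 : 'I_p.+1) k (f : 'I_k -> 'I_p) : ext x0 f ord0 = x0.
Proof. by rewrite /ext unlift_none. Qed.

Lemma extS p (x0 : 'I_p.+1) k (f : 'I_k -> 'I_p) y : ext x0 f (lift ord0 y) = lift x0 (f y).
Proof. by rewrite /ext liftK. Qed.

Lemma liftF n (i : 'I_n.+1) r : (lift i r == i) = false.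
Proof. by apply/negbTE; rewrite eq_sym neq_lift. Qed.

Lemma trimE m n (A : 'M[rat]_(m.+1, n.+1)) i j r c :
  trim_mx A i j r c = A (lift i r) (lift j c) - A (lift i r) j / A i j * A i (lift j c).
Proof. by rewrite /trim_mx !mxE liftF. Qed.

Lemma sum_delta p (x : 'I_p) (F : 'I_p -> rat) : \sum_z (x == z)%:R * F z = F x.
Proof.
rewrite (bigD1 x) //= eqxx mul1r big1 ?addr0 // => z zx.
by rewrite eq_sym (negbTE zx) mul0r.
Qed.

Lemma schur k (M : 'M[rat]_k.+1) : M 0 0 != 0 ->
  \det M = M 0 0 * \det (\matrix_(r, c) (M (lift 0 r) (lift 0 c) - M (lift 0 r) 0 / M 0 0 * M 0 (lift 0 c))).
Proof.
move=> a0.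
pose E : 'M[rat]_k.+1 := \matrix_(x, y) if x == 0 then (y == 0)%:R else (x == y)%:R - (y == 0)%:R * M x 0 / M 0 0.
pose N : 'M[rat]_k.+1 := \matrix_(x, y) if x == 0 then M x y else M x y - M x 0 / M 0 0 * M 0 y.
have EN : E *m M = N.
  apply/matrixP => x y; rewrite !mxE.
  case: ifP => x0.
    rewrite (eq_bigr (fun z => (0 == z)%:R * M z y)); first by rewrite sum_delta (eqP x0).
    by move=> z _; rewrite mxE x0 eq_sym.
  rewrite (eq_bigr (fun z => (x == z)%:R * M z y - (M x 0 / M 0 0) * ((0 == z)%:R * M z y))).
    by rewrite sumrB -mulr_sumr !sum_delta.
  by move=> z _; rewrite mxE x0 (eq_sym z); ring.
have dE : \det E = 1.
  rewrite det_trig; last first.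
    apply/is_trig_mxP => x1 y1 lxy; rewrite mxE.
    have -> : (x1 == y1) = false by apply/negbTE; rewrite neq_ltn lxy.
    have -> : (y1 == 0) = false by apply/negbTE; rewrite -lt0n (leq_ltn_trans _ lxy).
    by case: ifP => _; rewrite ?mul0r ?subr0.
  by rewrite big1 // => x2 _; rewrite mxE eqxx; case: ifP => hx0; rewrite ?hx0 // mul0r mul0r subr0.
have -> : \det M = \det N by rewrite -EN det_mulmx dE mul1r.
rewrite (expand_det_col _ 0) big_ord_recl big1 ?addr0; last first.
  move=> x _; rewrite mxE liftF divfK // subrr mul0r //.
rewrite mxE eqxx /cofactor /= expr0 mul1r; congr (_ * \det _).
by apply/matrixP => r c; rewrite !mxE liftF.
Qed.

Lemma detL m n (A : 'M[rat]_(m.+1,n.+1)) i j k (f : 'I_k -> 'I_m) g : A i j != 0 ->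
 \det (subsq A (ext i f) (ext j g)) = A i j * \det (subsq (trim_mx A i j) f g).
Proof.
move=> a0; have e00 : subsq A (ext i f) (ext j g) 0 0 = A i j by rewrite mxE !ext0.
rewrite schur e00 //; congr (_ * \det _).
apply/matrixP => r c; rewrite !mxE !extS !ext0. by rewrite liftF.
Qed.

Lemma inT_mul (a y : rat) : a \in [:: 0; 1; -1] -> y \in [:: 0; 1; -1] -> a * y \in [:: 0; 1; -1].
Proof.
rewrite !inE => /or3P [/eqP->|/eqP->|/eqP->] /or3P [/eqP->|/eqP->|/eqP->];
rewrite ?mul0r ?mulr0 ?mul1r ?mulr1 ?mulrNN ?mulN1r ?mulrN1 ?opprK ?inE ?eqxx ?orbT //.
Qed.

Lemma sq1 (a : rat) : a \in [:: 0; 1; -1] -> a != 0 -> a * a = 1 /\ `|a| = 1.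
Proof.
by rewrite !inE => /or3P [/eqP->|/eqP->|/eqP->] //= _; rewrite ?mulrNN ?mulr1 ?normrN ?normr1.
Qed.

Lemma TUsub M N (A : 'M[rat]_(M,N)) (S : {set 'I_M}) : tu_set (rows_of A S) ->
  forall k (f : 'I_k -> 'I_M) g, (forall x, f x \in S) -> \det (subsq A f g) \in [:: 0; 1; -1].
Proof.
move=> [_ [_ tu]] [|k] f g fS; first by rewrite det_mx00 !inE eqxx orbT.
have x0S := fS ord0.
pose h x := enum_rank_in x0S (f x).
have -> : subsq A f g = subsq (rows_of A S) h g.
  by apply/matrixP => x y; rewrite !mxE /h enum_rankK_in.
exact: tu.
Qed.

Lemma detnz_free M N k (B : 'M[rat]_(M,N)) (f : 'I_k -> 'I_M) g :
  \det (subsq B f g) != 0 -> row_free (rowsub f B).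
Proof.
move=> d0.
have e : subsq B f g = rowsub f B *m colsub g 1%:M.
  by rewrite mulmx_colsub mulmx1; apply/matrixP => x y; rewrite !mxE.
have u : subsq B f g \in unitmx by rewrite unitmxE unitfE.
have := mxrank_unit u; rewrite e => rk.
rewrite /row_free eqn_leq rank_leq_row /= -{1}rk.
exact: mxrankM_maxl.
Qed.

Lemma perm_det p N (A : 'M[rat]_(p, N)) (f : 'I_p -> 'I_p) g : injective f ->
  `|\det (subsq A f g)| = `|\det (subsq A (fun x => x) g)|.
Proof.
move=> finj.
have -> : subsq A f g = row_perm (perm finj) (subsq A (fun x => x) g).
  by apply/matrixP => x y; rewrite !mxE permE.
rewrite row_permE det_mulmx det_perm normrM normrX normrN1 expr1n mul1r //.
Qed.

Lemma free_minor M N (B : 'M[rat]_(M,N)) : row_free B ->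
  exists h : 'I_M -> 'I_N, \det (subsq B (fun x => x) h) != 0.
Proof.
move=> rf.
have := maxrowsub_free (B^T); move: (maxrankfun B^T).
rewrite mxrank_tr (eqP rf) => h hf.
exists h.
have -> : subsq B (fun x => x) h = (rowsub h B^T)^T by apply/matrixP => x y; rewrite !mxE.
by rewrite det_tr -unitfE -unitmxE -row_free_unit.
Qed.

Lemma trim_free m n (A : 'M[rat]_(m.+1,n.+1)) i j : A i j != 0 -> row_free A ->
  row_free (trim_mx A i j).
Proof.
move=> a0 rfA; rewrite -kermx_eq0; apply/eqP/row_matrixP => r; rewrite row0.
set v := row r (kermx _).
have vB : v *m trim_mx A i j = 0 by rewrite /v -row_mul mulmx_ker row0.
pose S := \sum_y v 0 y * A (lift i y) j.
pose w : 'rV_(m.+1) := \row_x (if unlift i x is Some y then v 0 y else - S / A i j).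
have wi : w 0 i = - S / A i j by rewrite mxE unlift_none.
have wl y : w 0 (lift i y) = v 0 y by rewrite mxE liftK.
have wA : w *m A = 0.
  apply/rowP => c; rewrite !mxE (bigD1_ord i) //= wi.
  under eq_bigr => y _ do rewrite wl.
  case: (unliftP j c) => [c'|] ->.
    have := congr1 (fun M : 'rV[rat]_n => M 0 c') vB; rewrite !mxE => vB'.
    have -> : \sum_(y < m) v 0 y * A (lift i y) (lift j c') =
              S / A i j * A i (lift j c').
      apply/eqP; rewrite -subr_eq0; apply/eqP; rewrite /S mulr_suml mulr_suml -sumrB -[in RHS]vB'.
      apply: eq_bigr => y _; rewrite trimE; ring.
    field; exact: a0.
  rewrite -/S; field; exact: a0.
have w0 : w = 0 by apply: (row_free_inj rfA); rewrite wA mul0mx.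
apply/rowP => y; move: (wl y); rewrite w0 !mxE => <-. by [].
Qed.

Lemma rowsub_free M N k (B : 'M[rat]_(M,N)) (f : 'I_k -> 'I_M) :
  injective f -> row_free B -> row_free (rowsub f B).
Proof.
move=> finj rfB; rewrite rowsubE /row_free mxrankMfree //.
apply/row_freeP; exists (rowsub f 1%:M)^T.
apply/matrixP => x y; rewrite !mxE.
under eq_bigr => z _ do rewrite !mxE.
by rewrite sum_delta (inj_eq finj) eq_sym.
Qed.

Lemma absT (x y : rat) : `|x| = `|y| -> y \in [:: 0; 1; -1] -> x \in [:: 0; 1; -1].
Proof.
move=> e; rewrite !inE => /or3P [/eqP yv|/eqP yv|/eqP yv]; subst y.
- by move: e; rewrite normr0 => /eqP; rewrite normr_eq0 => ->.
- have : `|x| == 1 by rewrite e normr1.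
  by rewrite eqr_norml => /andP [/orP [] ->]; rewrite ?orbT.
- have : `|x| == 1 by rewrite e normrN normr1.
  by rewrite eqr_norml => /andP [/orP [] ->]; rewrite ?orbT.
Qed.

Lemma ext_inj p (x0 : 'I_p.+1) k (f : 'I_k -> 'I_p) : injective f -> injective (ext x0 f).
Proof.
move=> finj x y.
case: (unliftP 0 x) => [x'|] ->; case: (unliftP 0 y) => [y'|] ->; rewrite ?extS ?ext0 //.
- by move/lift_inj/finj => ->.
- by move=> e; move: (neq_lift x0 (f x')); rewrite e eqxx.
- by move=> e; move: (neq_lift x0 (f y')); rewrite -e eqxx.
Qed.

Lemma notin_proper M (S : {set 'I_M}) r0 : r0 \notin S -> S \proper setT.
Proof.
move=> h; rewrite properT; apply/negP => /eqP e; move: h; rewrite e inE //.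
Qed.

Lemma proper_notin M (S : {set 'I_M}) : S \proper setT -> exists r0, r0 \notin S.
Proof.
move=> pS; apply/existsP; move: pS; rewrite properT; apply: contraR.
rewrite negb_exists => /forallP h; apply/eqP/setP => x; rewrite inE; exact/negPn/h.
Qed.

Theorem mainTheorem6 (m n : nat) (A : 'M[rat]_(m.+1, n.+1))
  (i : 'I_m.+1) (j : 'I_n.+1) :
  te_lace A -> (3 <= m.+1)%N -> A i j != 0 -> te_lace (trim_mx A i j).
Proof.
move=> [[pmA [rfA teA]] [ntu sub]] m3 a0.
set B := trim_mx A i j.
have pma := pmA i j.
have [aa na] := sq1 pma a0.
have rfB : row_free B by apply: trim_free.
have minorB k (f : 'I_k -> 'I_m) g : (exists r0, forall x, f x != r0) ->
    \det (subsq B f g) \in [:: 0; 1; -1].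
  move=> [r0 hr0].
  have -> : \det (subsq B f g) = A i j * \det (subsq A (ext i f) (ext j g)).
    by rewrite detL // mulrA aa mul1r.
  apply: inT_mul => //.
  pose S := [set x | x != lift i r0].
  apply: (TUsub (sub S _)).
    by apply: (@notin_proper _ _ (lift i r0)); rewrite inE eqxx.
  move=> x; rewrite inE; case: (unliftP 0 x) => [x'|] ->; rewrite ?extS ?ext0.
    by rewrite (inj_eq lift_inj).
  exact: neq_lift.
have pmB : pm1_mx B.
  move=> r c.
  have -> : B r c = \det (subsq B (fun _ : 'I_1 => r) (fun _ => c)).
   by rewrite det_mx11 /subsq !mxE.
  apply: minorB.
  have m1 : (1 < m)%N by [].
  case: (eqVneq (val r) 0) => h.
    by exists (Ordinal m1) => _; apply/eqP => e; move: h; rewrite e.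
  by exists (Ordinal (ltnW m1)) => _; apply/eqP => e; move: h; rewrite e.
split; first split => //; first split => //.
  move=> k f rf; split; first exact/eqP.
  move=> g1 g2 d1 d2.
  have dA1 : \det (subsq A (ext i f) (ext j g1)) != 0 by rewrite detL // mulf_neq0.
  have dA2 : \det (subsq A (ext i f) (ext j g2)) != 0 by rewrite detL // mulf_neq0.
  have [_ H] := teA _ _ (detnz_free dA1).
  by have := H _ _ dA1 dA2; rewrite !detL // !normrM na !mul1r.
split.
  move=> [_ [_ tuB]]; apply: ntu; split => //; split => //.
  move=> k f g.
  case: (boolP [exists r0, [forall x, f x != r0]]) => [/existsP [r0 /forallP hr0] | hall].
    apply: (TUsub (sub [set x | x != r0] _)).
      by apply: (@notin_proper _ _ r0); rewrite inE eqxx.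
    by move=> x; rewrite inE.
  case: (eqVneq (\det (subsq A f g)) 0) => [->|dnz]; first by rewrite !inE eqxx.
  have finj : injective f.
    move=> x y e; apply/eqP; apply/negPn/negP => nxy; move/eqP: dnz; apply.
    by apply: (determinant_alternate nxy) => c; rewrite !mxE e.
  have ek : k = m.+1.
    have := card_codom finj; rewrite card_ord => <-.
    rewrite eq_cardT -?cardT ?card_ord // => r.
    move: hall; rewrite negb_exists => /forallP /(_ r); rewrite negb_forall.
    move=> /existsP [x /negPn /eqP <-]; exact: codom_f.
  subst k.
  have [h dh] := free_minor rfB.
  have dA0 : \det (subsq A (ext i (fun x : 'I_m => x)) (ext j h)) != 0.
    by rewrite detL // mulf_neq0.
  have [_ H] := teA _ _ (detnz_free dA0).
  have e1 : `|\det (subsq A f g)| = `|\det (subsq A (ext i (fun x : 'I_m => x)) g)|.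
    by rewrite (perm_det _ _ finj) (perm_det _ _ (@ext_inj _ i _ (fun x : 'I_m => x) (fun x y (e : x = y) => e))).
  have dA3 : \det (subsq A (ext i (fun x : 'I_m => x)) g) != 0.
    by rewrite -normr_eq0 -e1 normr_eq0.
  apply: (@absT _ (\det (subsq B (fun x => x) h))); last exact: tuB.
  by rewrite e1 (H _ _ dA3 dA0) detL // normrM na mul1r.
move=> S pS.
have [r0 r0n] := proper_notin pS.
split.
  by move=> r c; rewrite mxE; apply: pmB.
split; first by apply: rowsub_free => //; exact: enum_val_inj.
move=> k f g.
have -> : subsq (rows_of B S) f g = subsq B (fun x => enum_val (f x)) g.
  by apply/matrixP => x y; rewrite !mxE.
apply: minorB; exists r0 => x; apply/eqP => e.
by move: (enum_valP (f x)); rewrite e (negbTE r0n).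
Qed.
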